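(* Suppose $|X|\ge3$ and let $t$ be a full support, state independent transition function, written $t(x)\in\Delta(\mathcal{L}(X))$. Then $t$ is menu invariant if and only if $t(x)=t(y)$ for all $x,y\in X$.
   Context: $X$ is finite, $\mathcal{X}_2$ the subsets of $X$ with at least two elements, $\mathcal{L}(X)$ the linear orders on $X$, $M(\succ,A)$ the $\succ$-maximal element of $A$. A transition function $t:X\times\mathcal{L}(X)\to\Delta(\mathcal{L}(X))$ is full support if all values have full support, and state independent if $t(x,\succ)=t(x,\succ')$ for all $x,\succ,\succ'$. For $A\in\mathcal{X}_2$, $M_A$ is the Markov matrix on $\mathcal{L}(X)$ with $m_A(\succ,\succ')=t_{\succ'}(M(\succ,A),\succ)$ (probability of $\succ'$ under $t(M(\succ,A),\succ)$), with unique stationary distribution $\nu_A$. $t$ is menu invariant if $\nu_A=\nu_B$ for all $A,B\in\mathcal{X}_2$. *)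

(* Defs.v *)
From HB Require Import structures.
From mathcomp Require Import all_boot all_order all_algebra.
Set Implicit Arguments. Unset Strict Implicit. Unset Printing Implicit Defensive.
Import Order.TTheory GRing.Theory Num.Theory.
Local Open Scope ring_scope.

Section Defs.
Variable X : finType.

(* A (strict) linear order on X, encoded as a boolean relation r with
   r (x, y) meaning "x is strictly preferred to y" (x ≻ y):
   irreflexive, transitive and total on distinct elements. *)
Definition is_linear_order (r : {ffun X * X -> bool}) : bool :=
  [&& [forall x, ~~ r (x, x)],
      [forall x, forall y, forall z, r (x, y) && r (y, z) ==> r (x, z)]
    & [forall x, forall y, (x != y) ==> r (x, y) || r (y, x)]].

Definition linord : Type := {r : {ffun X * X -> bool} | is_linear_order r}.
HB.instance Definition _ := Finite.on linord.

Definition menu (A : {set X}) : bool := (1 < #|A|)%N.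

(* M(≻, A): the ≻-maximal element of A (None only if A has none, which
   never happens for nonempty A). *)
Definition maxel (o : linord) (A : {set X}) : option X :=
  [pick x in A | [forall y in A, (y != x) ==> val o (x, y)]].

Variable R : realFieldType.

Definition is_dist (p : {ffun linord -> R}) : Prop :=
  (forall o, 0 <= p o) /\ \sum_o p o = 1.

Definition transition := X -> linord -> {ffun linord -> R}.

Definition is_transition (t : transition) : Prop :=
  forall x o, is_dist (t x o).

Definition full_support (t : transition) : Prop :=
  forall x o o', 0 < t x o o'.

Definition state_independent (t : transition) : Prop :=
  forall x o o', t x o = t x o'.

(* m_A(≻, ≻') = t_{≻'}(M(≻, A), ≻). *)
Definition markov (t : transition) (A : {set X}) (o o' : linord) : R :=
  match maxel o A with
  | Some x => t x o o'
  | None => 0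
  end.

Definition stationary (t : transition) (A : {set X}) (nu : {ffun linord -> R}) : Prop :=
  is_dist nu /\ forall o', \sum_o nu o * markov t A o o' = nu o'.

(* ν_A = ν_B for all menus A, B: any stationary distribution of M_A equals
   any stationary distribution of M_B (ν_A is unique under full support). *)
Definition menu_invariant (t : transition) : Prop :=
  forall A B, menu A -> menu B ->
  forall nuA nuB, stationary t A nuA -> stationary t B nuB -> nuA = nuB.

End Defs.

(* Main.v *)
Require Import Defs.
From mathcomp Require Import all_boot all_order all_algebra.
From mathcomp Require Import ring lra zify.
Import Order.TTheory GRing.Theory Num.Theory.
Set Implicit Arguments. Unset Strict Implicit. Unset Printing Implicit Defensive.

Section Aux.
Variable X : finType.

Definition lo_of (f : X -> nat) : {ffun X * X -> bool} :=
  [ffun uv => (f uv.1 < f uv.2)%N].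

Lemma lo_ofP f : injective f -> is_linear_order (lo_of f).
Proof.
move=> inj; apply/and3P; split.
- by apply/forallP => x; rewrite ffunE /= ltnn.
- apply/forallP=> x; apply/forallP=> y; apply/forallP=> z; rewrite !ffunE /=.
  by apply/implyP=> /andP[h1 h2]; exact: ltn_trans h1 h2.
- apply/forallP=> x; apply/forallP=> y; apply/implyP=> nxy; rewrite !ffunE /=.
  by rewrite -neq_ltn; apply: contra nxy => /eqP /inj ->.
Qed.

Definition rk (x : X) : nat := enum_rank x.
Lemma rk_inj : injective rk.
Proof. by move=> a b /val_inj /enum_rank_inj. Qed.
Lemma rev_lt n (i j : 'I_n) : (i < j)%N -> (rev_ord j < rev_ord i)%N.
Proof. move: (ltn_ord i) (ltn_ord j) => /= hi hj h; lia. Qed.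
Definition rk' (x : X) : nat := rev_ord (enum_rank x).
Lemma rk'_inj : injective rk'.
Proof. by move=> a b /val_inj /rev_ord_inj /enum_rank_inj. Qed.

Definition lo1 : linord X := exist _ (lo_of rk) (@lo_ofP rk rk_inj).
Definition lo2 : linord X := exist _ (lo_of rk') (@lo_ofP rk' rk'_inj).

Lemma lin_irr (o : linord X) u : ~~ val o (u, u).
Proof. by case/and3P: (valP o) => /forallP h _ _. Qed.

Lemma lin_tr (o : linord X) u v w : val o (u, v) -> val o (v, w) -> val o (u, w).
Proof.
case/and3P: (valP o) => _ /forallP h _ h1 h2.
by move: (h u) => /forallP /(_ v) /forallP /(_ w) /implyP; apply; rewrite h1.
Qed.

Lemma lin_tot (o : linord X) u v : u != v -> val o (u, v) || val o (v, u).
Proof.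
case/and3P: (valP o) => _ _ /forallP h nuv.
by move: (h u) => /forallP /(_ v) /implyP; apply.
Qed.

Lemma lin_asym (o : linord X) u v : val o (u, v) -> ~~ val o (v, u).
Proof. by move=> h1; apply/negP => h2; move: (lin_irr o u); rewrite (lin_tr h1 h2). Qed.

Lemma exists_lin u v : u != v -> exists o : linord X, val o (u, v).
Proof.
move=> nuv; have : rk u != rk v by apply: contra nuv => /eqP /rk_inj ->.
rewrite neq_ltn => /orP [h | h].
  by exists lo1; rewrite /= ffunE.
by exists lo2; rewrite /= ffunE /= /rk'; apply: rev_lt.
Qed.

Lemma maxel2 (o : linord X) u v : u != v ->
  maxel o [set u; v] = Some (if val o (u, v) then u else v).
Proof.
move=> nuv; rewrite /maxel; case: pickP => [w /andP [wA /forall_inP Hw] | H].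
  rewrite !inE in wA; case/orP: wA => /eqP ?; subst w.
    have := Hw v; rewrite !inE eqxx orbT => /(_ isT); rewrite eq_sym nuv /= => ->; by [].
  have := Hw u; rewrite !inE eqxx /= => /(_ isT); rewrite nuv /= => h.
  by rewrite (negbTE (lin_asym h)).
exfalso; case/orP: (lin_tot o nuv) => h.
  move: (H u); rewrite !inE eqxx /=; move/negP; apply.
  apply/forall_inP => y; rewrite !inE => /orP [] /eqP ->; rewrite ?eqxx //.
  by apply/implyP => _; exact: h.
move: (H v); rewrite !inE eqxx orbT /=; move/negP; apply.
apply/forall_inP => y; rewrite !inE => /orP [] /eqP ->; rewrite ?eqxx //.
by apply/implyP => _; exact: h.
Qed.

End Aux.

Section Main.
Variables (X : finType) (R : realFieldType).
Local Open Scope ring_scope.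

Lemma alg (a b c P Q Z : R) : 0 < a < 1 -> 0 < b < 1 -> 0 < c < 1 ->
  a * P + (1 - a) * Q = b * P + (1 - b) * Z ->
  a * P + (1 - a) * Q = c * Q + (1 - c) * Z -> P = Q.
Proof.
move=> /andP[a0 a1] /andP[b0 b1] /andP[c0 c1] e2 e3.
have K0 : 0 < c * a * (1 - b) + b * (1 - a) * (1 - c).
  have h1 : 0 < c * a * (1 - b) by rewrite !mulr_gt0 // subr_gt0.
  have h2 : 0 <= b * (1 - a) * (1 - c) by rewrite !mulr_ge0 // ?subr_ge0 ltW.
  lra.
have : (P - Q) * (c * a * (1 - b) + b * (1 - a) * (1 - c)) =
   (1 - c) * ((b * P + (1 - b) * Z) - (a * P + (1 - a) * Q))
 - (1 - b) * ((c * Q + (1 - c) * Z) - (a * P + (1 - a) * Q)) by ring.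
rewrite -e2 -e3 !subrr !mulr0 subrr => /eqP; rewrite mulf_eq0 subr_eq0 (gt_eqF K0) orbF.
by move/eqP.
Qed.

Lemma sum_pos_sub (q : {ffun linord X -> R}) (P : pred (linord X)) o0 :
  (forall o, 0 < q o) -> P o0 -> 0 < \sum_(o | P o) q o.
Proof.
move=> qp P0; rewrite (bigD1 o0) //=.
have : 0 <= \sum_(i | P i && (i != o0)) q i by apply: sumr_ge0 => i _; exact: ltW.
have := qp o0; lra.
Qed.

Variable t : transition X R.
Hypotheses (Ht : is_transition t) (Hfs : full_support t) (Hsi : state_independent t).

Definition p (x : X) := t x (lo1 X).

Lemma tp x o : t x o = p x. Proof. exact: Hsi. Qed.

Section Pair.
Variables (u v : X).
Hypothesis nuv : u != v.

Let A : pred (linord X) := fun o => val o (u, v).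
Definition al := \sum_(o | A o) p u o.
Definition be := \sum_(o | A o) p v o.
Definition aa := be / (1 - al + be).
Definition nu : {ffun linord X -> R} := [ffun o => aa * p u o + (1 - aa) * p v o].

Lemma split_sum (q : {ffun linord X -> R}) :
  \sum_o q o = \sum_(o | A o) q o + \sum_(o | ~~ A o) q o.
Proof. exact: bigID. Qed.

Lemma pu_sum x : \sum_o p x o = 1.
Proof. by case: (Ht x (lo1 X)). Qed.
Lemma pu_ge0 x o : 0 <= p x o.
Proof. by case: (Ht x (lo1 X)). Qed.

Lemma Dfacts : 0 < be /\ al < 1.
Proof.
have [o1 h1] := exists_lin nuv.
have [o2 h2] : exists o : linord X, val o (v, u) by apply: exists_lin; rewrite eq_sym.
have Hbe : 0 < be := sum_pos_sub (Hfs v (lo1 X)) h1.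
have Hc : 0 < \sum_(o | ~~ A o) p u o :=
  @sum_pos_sub _ (fun o => ~~ A o) o2 (Hfs u (lo1 X)) (lin_asym h2).
have : al + \sum_(o | ~~ A o) p u o = 1 by rewrite /al -split_sum pu_sum.
split => //; lra.
Qed.

Lemma aa_bounds : 0 < aa < 1.
Proof.
have [h1 h2] := Dfacts.
have D0 : 0 < 1 - al + be by lra.
rewrite /aa divr_gt0 //= ltr_pdivrMr // mul1r; lra.
Qed.

Lemma nu_stat : stationary t [set u; v] nu.
Proof.
have [h1 h2] := Dfacts.
have D0 : 0 < 1 - al + be by lra.
have /andP [a0 a1] := aa_bounds.
have nu_sum : \sum_o nu o = 1.
  under eq_bigr do rewrite ffunE.
  by rewrite big_split /= -!mulr_sumr !pu_sum; ring.
split; first split => //.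
  move=> o; rewrite ffunE addr_ge0 // mulr_ge0 ?pu_ge0 //; [exact: ltW | lra].
move=> o'; rewrite /markov.
under eq_bigr => o _ do rewrite maxel2 //.
rewrite (bigID A) /=.
rewrite (eq_bigr (fun o => nu o * p u o')) => [|o Ao]; last by have Ao' : sval o (u, v) := Ao; rewrite Ao' tp.
rewrite [X in _ + X](eq_bigr (fun o => nu o * p v o')) => [|o Ao]; last by have Ao' : sval o (u, v) = false := negbTE Ao; rewrite Ao' tp.
rewrite -!mulr_suml.
have Hs := split_sum nu; rewrite nu_sum in Hs.
have -> : \sum_(o | ~~ A o) nu o = 1 - \sum_(o | A o) nu o by lra.
have -> : \sum_(o | A o) nu o = aa.
  under eq_bigr do rewrite ffunE.
  rewrite big_split /= -!mulr_sumr -/al -/be.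
  have : aa * (1 - al + be) = be by rewrite /aa divfK // gt_eqF.
  lra.
by rewrite ffunE.
Qed.
End Pair.

Lemma menu2 (x y : X) : x != y -> menu [set x; y].
Proof. by move=> nxy; rewrite /menu cards2 nxy. Qed.

Lemma fwd : (2 < #|X|)%N -> menu_invariant t -> forall (x y : X) (o : linord X), t x o = t y o.
Proof.
move=> c3 Hmi x y o; case: (eqVneq x y) => [-> //| nxy].
have [z Hz] : exists z, z \notin [set x; y].
  case: (pickP (fun z => z \notin [set x; y])) => [z Hz | H]; first by exists z.
  exfalso.
  have : (#|X| <= #|[set x; y]|)%N.
    by apply: subset_leq_card; apply/subsetP => z _; move: (H z) => /negbFE.
  by rewrite cards2 nxy leqNgt c3.
rewrite !inE negb_or in Hz; case/andP: Hz => nzx nzy.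
have nxz : x != z by rewrite eq_sym.
have nyz : y != z by rewrite eq_sym.
have E1 := Hmi _ _ (menu2 nxy) (menu2 nxz) _ _ (nu_stat nxy) (nu_stat nxz).
have E2 := Hmi _ _ (menu2 nxy) (menu2 nyz) _ _ (nu_stat nxy) (nu_stat nyz).
rewrite !tp; apply/ffunP => o'.
apply: (alg (Z := p z o') (aa_bounds nxy) (aa_bounds nxz) (aa_bounds nyz)).
  by have := congr1 (fun f : {ffun linord X -> R} => f o') E1; rewrite /= !ffunE.
by have := congr1 (fun f : {ffun linord X -> R} => f o') E2; rewrite /= !ffunE.
Qed.

Lemma stat_eq (H : forall (x y : X) (o : linord X), t x o = t y o) (x0 : X) A q :
  stationary t A q -> q = p x0.
Proof.
move=> [[q0 q1] Sq].
pose s := \sum_o q o * (if maxel o A is Some _ then 1 else 0).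
have E : forall o', q o' = s * p x0 o'.
  move=> o'; rewrite -Sq /s mulr_suml; apply: eq_bigr => o _.
  rewrite /markov; case: (maxel o A) => [x|]; last by rewrite !mulr0 mul0r.
  by rewrite mulr1 (H x x0) tp.
have s1 : s = 1.
  by rewrite -q1 (eq_bigr _ (fun o _ => E o)) -mulr_sumr pu_sum mulr1.
by apply/ffunP => o'; rewrite E s1 mul1r.
Qed.

Lemma bwd : (2 < #|X|)%N -> (forall (x y : X) (o : linord X), t x o = t y o) -> menu_invariant t.
Proof.
move=> c3 H A B _ _ nA nB SA SB.
have [x0 _] : exists x0 : X, x0 \in X by apply/card_gt0P; apply: ltnW; apply: ltnW.
by rewrite (stat_eq H x0 SA) (stat_eq H x0 SB).
Qed.
End Main.

Theorem proposition6 (X : finType) (R : realFieldType) (t : transition X R) :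
  (2 < #|X|)%N ->
  is_transition t -> full_support t -> state_independent t ->
  (menu_invariant t <-> forall (x y : X) (o : linord X), t x o = t y o).
Proof.
move=> c3 Ht Hfs Hsi; split.
  exact: (fwd Ht Hfs Hsi c3).
exact: (bwd Ht Hsi c3).
Qed.
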